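(* Let $n,d\ge1$, $p>d$, $\Delta\in\mathbb{R}^{nd\times nd}$ symmetric with $d\times d$ blocks, $\Delta_{ii}=0$, $Z^{\top}=[I_d,\dots,I_d]$, $A=ZZ^{\top}+\Delta$, $f(S)=\langle A,SS^{\top}\rangle$. Every second-order critical point $S$ of $f$ satisfies \[ (p-d)\|Z^{\top}S\|_F^2\ge(p-2d)n^2d+\|SS^{\top}\|_F^2\,d+\sum_{i=1}^n\sum_{j=1}^n\big(\|S_iS_j^{\top}\|_F^2-d\big)\mathrm{Tr}(\Delta_{ij})+(p-d)\langle\Delta,ZZ^{\top}-SS^{\top}\rangle. \]
   Context: $S\in\mathbb{R}^{nd\times p}$ has $d\times p$ blocks $S_i$ with $S_iS_i^{\top}=I_d$; $A_{ij}=I_d+\Delta_{ij}$; $\langle X,Y\rangle=\mathrm{Tr}(XY^{\top})$. $\Lambda_{ii}=\frac12\sum_j(S_iS_j^{\top}A_{ji}+A_{ij}S_jS_i^{\top})$; $T_{S_i}=\{Y\in\mathbb{R}^{d\times p}:S_iY^{\top}+YS_i^{\top}=0\}$. $S$ is a second-order critical point if $\sum_jA_{ij}S_j=\Lambda_{ii}S_i$ for all $i$ and $\sum_i\langle\Lambda_{ii},\dot S_i\dot S_i^{\top}\rangle\ge\sum_{i,j}\langle A_{ij},\dot S_i\dot S_j^{\top}\rangle$ for all $\dot S_i\in T_{S_i}$. *)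

(* Defs.v *)
From HB Require Import structures.
From mathcomp Require Import all_boot all_order all_algebra.
Set Implicit Arguments. Unset Strict Implicit. Unset Printing Implicit Defensive.
Import Order.TTheory GRing.Theory Num.Theory.
Local Open Scope ring_scope.

(* A matrix in R^{nd x p} is represented by its n blocks S i : 'M_(d,p);
   a matrix in R^{nd x nd} by its n*n blocks M i j : 'M_d. *)

Definition frob_ip (R : ringType) (m k : nat) (X Y : 'M[R]_(m, k)) : R :=
  \tr (X *m Y^T).

Definition frob2 (R : ringType) (m k : nat) (X : 'M[R]_(m, k)) : R :=
  frob_ip X X.

Definition Amat (R : ringType) (n d : nat) (Delta : 'I_n -> 'I_n -> 'M[R]_d)
  (i j : 'I_n) : 'M[R]_d := 1%:M + Delta i j.

Definition Lambda (R : fieldType) (n d p : nat) (A : 'I_n -> 'I_n -> 'M[R]_d)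
  (S : 'I_n -> 'M[R]_(d, p)) (i : 'I_n) : 'M[R]_d :=
  2^-1 *: \sum_(j < n) (S i *m (S j)^T *m A j i + A i j *m S j *m (S i)^T).

Definition tangent (R : ringType) (d p : nat) (Si Y : 'M[R]_(d, p)) : Prop :=
  Si *m Y^T + Y *m Si^T = 0.

Definition second_order_critical (R : realFieldType) (n d p : nat)
  (A : 'I_n -> 'I_n -> 'M[R]_d) (S : 'I_n -> 'M[R]_(d, p)) : Prop :=
  [/\ (forall i, S i *m (S i)^T = 1%:M),
      (forall i, \sum_(j < n) A i j *m S j = Lambda A S i *m S i) &
      (forall Sd : 'I_n -> 'M[R]_(d, p), (forall i, tangent (S i) (Sd i)) ->
         \sum_(i < n) frob_ip (Lambda A S i) (Sd i *m (Sd i)^T)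
         >= \sum_(i < n) \sum_(j < n) frob_ip (A i j) (Sd i *m (Sd j)^T))].

(* Main.v *)
Require Import Defs.
From HB Require Import structures.
From mathcomp Require Import all_boot all_order all_algebra.
From mathcomp Require Import ring lra.
Set Implicit Arguments. Unset Strict Implicit.
Import Order.TTheory GRing.Theory Num.Theory.
Local Open Scope ring_scope.

Lemma dMd (R : comRingType) d p (a : 'I_d) (b : 'I_p) (M : 'M[R]_p) :
  delta_mx a b *m M *m (delta_mx a b)^T = M b b *: delta_mx a a.
Proof.
apply/matrixP=> i j; rewrite !mxE.
rewrite (bigD1 b) //= big1 ?addr0; last first.
  by move=> k /negPf kb; rewrite !mxE kb andbF mulr0.
rewrite !mxE eqxx andbT (bigD1 b) //= big1 ?addr0; last first.
  by move=> k /negPf kb; rewrite !mxE kb andbF mul0r.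
rewrite !mxE eqxx /= andbT.
case: (i == a); case: (j == a); rewrite /= ?mulr1 ?mulr0 ?mul0r ?mul1r //.
Qed.
Lemma trCd (R : comRingType) d (a : 'I_d) (C : 'M[R]_d) : \tr (C *m delta_mx a a) = C a a.
Proof.
rewrite /mxtrace (bigD1 a) //= big1 ?addr0.
  rewrite !mxE (bigD1 a) //= big1 ?addr0 ?mxE ?eqxx ?mulr1 //.
  by move=> k /negPf ka; rewrite !mxE ka mulr0.
move=> i /negPf ia; rewrite !mxE big1 // => k _; rewrite !mxE ia andbF mulr0 //.
Qed.
Lemma key (R : comRingType) d p (C : 'M[R]_d) (M : 'M[R]_p) :
  \sum_(a < d) \sum_(b < p) frob_ip C (delta_mx a b *m M *m (delta_mx a b)^T)
  = \tr C * \tr M.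
Proof.
rewrite /frob_ip.
under eq_bigr => a _ do under eq_bigr => b _ do
  rewrite dMd linearZ /= trmx_delta -scalemxAr mxtraceZ trCd.
rewrite {1}/mxtrace big_distrl /=; apply: eq_bigr => a _.
by rewrite /mxtrace big_distrr /=; apply: eq_bigr => b _; rewrite mulrC.
Qed.
Lemma swap3 (R : zmodType) m1 m2 m3 (F : 'I_m1 -> 'I_m2 -> 'I_m3 -> R) :
  \sum_(a < m1) \sum_(b < m2) \sum_(i < m3) F a b i
  = \sum_(i < m3) \sum_(a < m1) \sum_(b < m2) F a b i.
Proof.
under eq_bigr => a _ do rewrite exchange_big.
by rewrite exchange_big.
Qed.
Lemma swap4 (R : zmodType) m1 m2 m3 m4 (F : 'I_m1 -> 'I_m2 -> 'I_m3 -> 'I_m4 -> R) :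
  \sum_(a < m1) \sum_(b < m2) \sum_(i < m3) \sum_(j < m4) F a b i j
  = \sum_(i < m3) \sum_(j < m4) \sum_(a < m1) \sum_(b < m2) F a b i j.
Proof.
rewrite swap3; apply: eq_bigr => i _; exact: swap3.
Qed.
Section DS.
Variables (R : comRingType) (n : nat).
Implicit Types (F G : 'I_n -> 'I_n -> R).
Lemma dsD F G : \sum_(i < n) \sum_(j < n) F i j + \sum_(i < n) \sum_(j < n) G i j
  = \sum_(i < n) \sum_(j < n) (F i j + G i j).
Proof. rewrite -big_split; apply: eq_bigr => i _; by rewrite -big_split. Qed.
Lemma dsB F G : \sum_(i < n) \sum_(j < n) F i j - \sum_(i < n) \sum_(j < n) G i j
  = \sum_(i < n) \sum_(j < n) (F i j - G i j).
Proof. rewrite -sumrB; apply: eq_bigr => i _; by rewrite -sumrB. Qed.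
Lemma dsZl c F : c * \sum_(i < n) \sum_(j < n) F i j = \sum_(i < n) \sum_(j < n) (c * F i j).
Proof. rewrite mulr_sumr; apply: eq_bigr => i _; by rewrite mulr_sumr. Qed.
Lemma dsZr c F : (\sum_(i < n) \sum_(j < n) F i j) * c = \sum_(i < n) \sum_(j < n) (F i j * c).
Proof. rewrite mulr_suml; apply: eq_bigr => i _; by rewrite mulr_suml. Qed.
Lemma dsZl1 c F : \sum_(i < n) c * \sum_(j < n) F i j = \sum_(i < n) \sum_(j < n) (c * F i j).
Proof. apply: eq_bigr => i _; by rewrite mulr_sumr. Qed.
Lemma dsZr1 c F : \sum_(i < n) (\sum_(j < n) F i j) * c = \sum_(i < n) \sum_(j < n) (F i j * c).
Proof. apply: eq_bigr => i _; by rewrite mulr_suml. Qed.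
Lemma ds_eq F G : (forall i j, F i j = G i j) ->
  \sum_(i < n) \sum_(j < n) F i j = \sum_(i < n) \sum_(j < n) G i j.
Proof. move=> e; apply: eq_bigr => i _; apply: eq_bigr => j _; exact: e. Qed.
End DS.

Lemma alg_ineq (R : realFieldType) n (Pp D : R) (g t h e : 'I_n -> 'I_n -> R) :
 \sum_(i < n) \sum_(j < n) (D + t i j) * (Pp - 2 * D + g i j)
   <= \sum_(i < n) (\sum_(j < n) (h i j + e i j)) * (Pp - 2 * D + D) ->
 (Pp - 2 * D) * (n%:R ^+ 2 * D) + (\sum_(i < n) \sum_(j < n) g i j) * D
 + \sum_(i < n) \sum_(j < n) (g i j - D) * t i j
 + (Pp - D) * \sum_(i < n) \sum_(j < n) (t i j - e i j)
 <= (Pp - D) * \sum_(i < n) \sum_(j < n) h i j.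
Proof.
have c : n%:R ^+ 2 * D = \sum_(i < n) \sum_(j < n) D.
  by rewrite !sumr_const card_ord -mulrnA -[RHS]mulr_natl natrM expr2.
rewrite c dsZr1 dsZl !dsZr dsZl !dsD.
rewrite dsZl -subr_ge0 dsB => H; rewrite -subr_ge0 dsB; apply: (le_trans H).
rewrite le_eqVlt; apply/orP; left; apply/eqP; apply: ds_eq => i j; ring.
Qed.

Theorem lemma6 (R : realFieldType) (n d p : nat)
  (Delta : 'I_n -> 'I_n -> 'M[R]_d) (S : 'I_n -> 'M[R]_(d, p)) :
  (0 < n)%N -> (0 < d)%N -> (d < p)%N ->
  (forall i j, Delta j i = (Delta i j)^T) ->
  (forall i, Delta i i = 0) ->
  second_order_critical (Amat Delta) S ->
  (p%:R - d%:R) * frob2 (\sum_(i < n) S i)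
  >= (p%:R - 2 * d%:R) * (n ^ 2 * d)%:R
     + (\sum_(i < n) \sum_(j < n) frob2 (S i *m (S j)^T)) * d%:R
     + \sum_(i < n) \sum_(j < n) (frob2 (S i *m (S j)^T) - d%:R) * \tr (Delta i j)
     + (p%:R - d%:R) *
         \sum_(i < n) \sum_(j < n) frob_ip (Delta i j) (1%:M - S i *m (S j)^T).
Proof.
move=> _ _ _ Dsym D0 [Hf _ H2].
pose P i : 'M[R]_p := 1%:M - (S i)^T *m S i.
have SP i : S i *m P i = 0 by rewrite mulmxBr mulmx1 mulmxA Hf mul1mx subrr.
have Ptr i : (P i)^T = P i by rewrite /P linearB /= trmx1 trmx_mul trmxK.
have PS i : P i *m (S i)^T = 0 by rewrite -Ptr -trmx_mul SP trmx0.
have tan (X : 'M[R]_(d, p)) i : tangent (S i) (X *m P i).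
  by rewrite /tangent trmx_mul Ptr mulmxA SP mul0mx -mulmxA PS mulmx0 addr0.
have Hs : \sum_(a < d) \sum_(b < p) \sum_(i < n) \sum_(j < n)
      frob_ip (Amat Delta i j) ((delta_mx a b *m P i) *m (delta_mx a b *m P j)^T)
   <= \sum_(a < d) \sum_(b < p) \sum_(i < n)
      frob_ip (Lambda (Amat Delta) S i) ((delta_mx a b *m P i) *m (delta_mx a b *m P i)^T).
  by apply: ler_sum => a _; apply: ler_sum => b _; exact: H2.
have E (C : 'M[R]_d) i j : \sum_(a < d) \sum_(b < p)
    frob_ip C ((delta_mx a b *m P i) *m (delta_mx a b *m P j)^T) = \tr C * \tr (P i *m (P j)^T).
  rewrite -key; apply: eq_bigr => a _; apply: eq_bigr => b _.
  by rewrite (trmx_mul (delta_mx a b)) !mulmxA.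
have Hs2 : \sum_(i < n) \sum_(j < n) \tr (Amat Delta i j) * \tr (P i *m (P j)^T)
   <= \sum_(i < n) \tr (Lambda (Amat Delta) S i) * \tr (P i *m (P i)^T).
  move: Hs.
  rewrite (swap4 (fun a b i j => frob_ip (Amat Delta i j) (delta_mx a b *m P i *m (delta_mx a b *m P j)^T))).
  rewrite (swap3 (fun a b i => frob_ip (Lambda (Amat Delta) S i) (delta_mx a b *m P i *m (delta_mx a b *m P i)^T))).
  move=> Hs; apply: le_trans (le_trans Hs _).
    by rewrite le_eqVlt; apply/orP; left; apply/eqP; apply: eq_bigr => i _; apply: eq_bigr => j _; rewrite E.
  by rewrite le_eqVlt; apply/orP; left; apply/eqP; apply: eq_bigr => i _; rewrite E.
clear Hs E H2.
have trPP i j : \tr (P i *m (P j)^T) = p%:R - 2 * d%:R + frob2 (S i *m (S j)^T).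
  have e4 : \tr ((S i)^T *m S i *m ((S j)^T *m S j)) = frob2 (S i *m (S j)^T).
    rewrite /frob2 /frob_ip trmx_mul trmxK -!mulmxA mxtrace_mulC !mulmxA //.
  rewrite Ptr /P mulmxBl mul1mx mulmxBr mulmx1 !linearB /= mxtrace1.
  rewrite e4 !(mxtrace_mulC (_^T)) !Hf mxtrace1; ring.
have gii i : frob2 (S i *m (S i)^T) = d%:R.
  by rewrite Hf /frob2 /frob_ip trmx1 mulmx1 mxtrace1.
have trS i j : \tr (S j *m (S i)^T) = \tr (S i *m (S j)^T).
  by rewrite -mxtrace_tr trmx_mul trmxK.
have trL i : \tr (Lambda (Amat Delta) S i) =
    \sum_(j < n) (\tr (S i *m (S j)^T) + frob_ip (Delta i j) (S i *m (S j)^T)).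
  rewrite /Lambda mxtraceZ raddf_sum /= big_distrr; apply: eq_bigr => j _ /=.
  have e1 : \tr (S i *m (S j)^T *m Amat Delta j i) = \tr (Amat Delta i j *m S j *m (S i)^T).
    by rewrite -mxtrace_tr !trmx_mul trmxK /Amat linearD /= trmx1 Dsym trmxK !mulmxA.
  rewrite mxtraceD e1 /Amat -mulmxA mulmxDl mul1mx mxtraceD (trS i j) /frob_ip trmx_mul trmxK.
  by field.
have trA i j : \tr (Amat Delta i j) = d%:R + \tr (Delta i j).
  by rewrite /Amat mxtraceD mxtrace1.
have fD i j : frob_ip (Delta i j) (1%:M - S i *m (S j)^T)
    = \tr (Delta i j) - frob_ip (Delta i j) (S i *m (S j)^T).
  by rewrite /frob_ip linearB /= trmx1 mulmxBr mulmx1 linearB.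
have fS : frob2 (\sum_(i < n) S i) = \sum_(i < n) \sum_(j < n) \tr (S i *m (S j)^T).
  rewrite /frob2 /frob_ip linear_sum mulmx_suml raddf_sum; apply: eq_bigr => i _ /=.
  by rewrite mulmx_sumr raddf_sum.
have Hs3 : \sum_(i < n) \sum_(j < n) (d%:R + \tr (Delta i j)) * (p%:R - 2 * d%:R + frob2 (S i *m (S j)^T))
   <= \sum_(i < n) (\sum_(j < n) (\tr (S i *m (S j)^T) + frob_ip (Delta i j) (S i *m (S j)^T)))
        * (p%:R - 2 * d%:R + d%:R).
  apply: le_trans (le_trans Hs2 _).
    by rewrite le_eqVlt; apply/orP; left; apply/eqP; apply: ds_eq => i j; rewrite trA trPP.
  by rewrite le_eqVlt; apply/orP; left; apply/eqP; apply: eq_bigr => i _; rewrite trL trPP gii.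
rewrite natrM natrX fS.
rewrite (ds_eq fD).
exact: alg_ineq Hs3.
Qed.
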